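(* The sequence $\left(\frac{H(n)}{\log n}\right)_{n=2}^\infty$ is $\mathcal I_{<1}$-convergent to $0$; that is, for every $\varepsilon>0$ the set $\{n\ge2:\frac{H(n)}{\log n}\ge\varepsilon\}$ has convergence exponent strictly less than $1$.
   Context: $\mathbb N$ denotes the set of positive integers. For $n>1$ with canonical factorization $n=p_1^{\alpha_1}\cdots p_k^{\alpha_k}$ (distinct primes $p_j$, $\alpha_j\ge1$), $H(n)=\max_{1\le j\le k}\alpha_j$. For $A\subset\mathbb N$ the convergence exponent is $\lambda(A)=\inf\{t>0:\sum_{a\in A}a^{-t}<\infty\}$, and $\mathcal I_{<1}=\{A\subset\mathbb N:\lambda(A)<1\}$. A sequence $(x_n)$ is $\mathcal I$-convergent to $L$ if for every $\varepsilon>0$ the set $\{n:|x_n-L|\ge\varepsilon\}$ belongs to $\mathcal I$. *)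

(* Defs.v *)
From mathcomp Require Import ssreflect ssrbool ssrnat fintype prime bigop.

(* H n = max_j alpha_j where n = p_1^alpha_1 ... p_k^alpha_k (n > 1).
   logn p n is the exponent of p in n (0 if p does not divide n). *)
Definition H (n : nat) : nat := (\max_(p < n.+1 | prime p) logn p n)%N.

From Stdlib Require Import Reals ClassicalEpsilon.
Local Open Scope R_scope.

Definition ind (P : Prop) : R :=
  if excluded_middle_informative P then 1 else 0.

(* partial sums  sum_{a in A, 1 <= a <= N+1} a^(-t) ; A is a subset of the
   positive integers (the value 0 is never summed). *)
Definition partial_sum (A : nat -> Prop) (t : R) (N : nat) : R :=
  sum_f_R0 (fun k => ind (A (S k)) * Rpower (INR (S k)) (- t)) N.

Definition summable_exp (A : nat -> Prop) (t : R) : Prop :=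
  exists l : R, Un_cv (partial_sum A t) l.

Definition exp_set (A : nat -> Prop) (t : R) : Prop :=
  0 < t /\ summable_exp A t.

Definition is_lower_bound (E : R -> Prop) (m : R) : Prop :=
  forall x, E x -> m <= x.

Definition is_glb (E : R -> Prop) (m : R) : Prop :=
  is_lower_bound E m /\ (forall b, is_lower_bound E b -> b <= m).

Definition in_I_lt1 (A : nat -> Prop) : Prop :=
  exists lam : R, is_glb (exp_set A) lam /\ lam < 1.

Definition I_lt1_converges_from (n0 : nat) (x : nat -> R) (L : R) : Prop :=
  forall eps : R, 0 < eps ->
    in_I_lt1 (fun n => (n0 <= n)%nat /\ Rabs (x n - L) >= eps).

(* Main.v *)
Require Import Defs.
From mathcomp Require Import ssreflect ssrbool eqtype ssrnat div fintype prime bigop.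
From Stdlib Require Import Reals Lra Lia ClassicalEpsilon.
Require Import Defs.
Open Scope R_scope.

Lemma ind_T (P : Prop) : P -> ind P = 1.
Proof. move=> HP; rewrite /ind; case: excluded_middle_informative => //. Qed.
Lemma ind_F (P : Prop) : ~ P -> ind P = 0.
Proof. move=> HP; rewrite /ind; case: excluded_middle_informative => //. Qed.
Lemma ind_ge0 P : 0 <= ind P.
Proof. rewrite /ind; destruct (excluded_middle_informative P); simpl; lra. Qed.
Lemma ind_le1 P : ind P <= 1.
Proof. rewrite /ind; destruct (excluded_middle_informative P); simpl; lra. Qed.

Fixpoint Fs (g : nat -> R) (N : nat) : R :=
  match N with O => 0 | S N' => Fs g N' + g (S N') end.

Lemma Fs_le (f g : nat -> R) (N : nat) : (forall n : nat, (1 <= n <= N)%nat -> f n <= g n) -> Fs f N <= Fs g N.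
Proof.
elim: N => [|N IH] H /=; first lra.
have h1 : f N.+1 <= g N.+1 by apply: H; rewrite leqnn andbT.
suff: Fs f N <= Fs g N by move=> ?; lra.
apply: IH => n /andP [h2 h3]; apply: H; rewrite h2 /=; exact: leqW.
Qed.

Lemma Fs_sum (f : nat -> nat -> R) K N :
  Fs (fun n => sum_f_R0 (fun i => f i n) K) N = sum_f_R0 (fun i => Fs (f i) N) K.
Proof.
elim: N => [|N IH] /=.
  by rewrite sum_cte; ring.
by rewrite IH -sum_plus.
Qed.

Lemma sum_psR f N : sum_f_R0 (fun k => f (S k)) N = Fs f (S N).
Proof. elim: N => [|N IH] /=; first ring. by rewrite IH. Qed.

Lemma sum_ge_term (f : nat -> R) K i : (forall j, (j <= K)%nat -> 0 <= f j) ->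
  (i <= K)%nat -> f i <= sum_f_R0 f K.
Proof.
elim: K => [|K IH] H Hi /=.
  by move: Hi; rewrite leqn0 => /eqP ->; lra.
have h0 := H K.+1 (leqnn _).
have hs : 0 <= sum_f_R0 f K.
  clear IH Hi; elim: K H h0 => [|K IH] H h0 /=. by apply: H.
  have := H K.+1 (leqW (leqnn _)). have := IH (fun j hj => H j (leqW hj)). 
  move=> a b; have := a b; lra.
case: (leqP i K) => hik.
  have := IH (fun j hj => H j (leqW hj)) hik; lra.
have -> : i = K.+1 by apply/eqP; rewrite eqn_leq Hi hik.
lra.
Qed.

Lemma exp_le_mono x y : x <= y -> exp x <= exp y.
Proof. case=> h; [left; exact: exp_increasing | rewrite h; lra]. Qed.
Lemma ln_le_mono x y : 0 < x -> x <= y -> ln x <= ln y.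
Proof. move=> hx; case=> h; [left; exact: ln_increasing | rewrite h; lra]. Qed.
Lemma exp_mul_nat h c : exp (INR h * c) = exp c ^ h.
Proof. elim: h => [|h IH]; first by rewrite /= Rmult_0_l exp_0.
rewrite S_INR /= -IH -exp_plus; f_equal; ring. Qed.

Lemma key_step a x : 0 < a <= 1 -> 1 <= x ->
  2 / a * Rpower x a + Rpower (x + 1) (a - 1) <= 2 / a * Rpower (x + 1) a.
Proof.
move=> [ha0 ha1] hx. set y := x + 1.
have hy : 0 < y by rewrite /y; lra.
have hx0 : 0 < x by lra.
have hl : ln x - ln y <= - / y.
  have := exp_ineq1_le (ln x - ln y).
  rewrite /Rminus exp_plus exp_Ropp !exp_ln //.
  have -> : x * / y = 1 - / y by rewrite /y; field; lra.
  lra.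
set X := Rpower x a. set Y := Rpower y a.
have hX : 0 < X by apply: exp_pos.
have hY : 0 < Y by apply: exp_pos.
have hYX : X * (1 + a * / y) <= Y.
  have e : Y = X * exp (a * (ln y - ln x)).
    rewrite /X /Y /Rpower -exp_plus; f_equal; ring.
  rewrite e; apply: Rmult_le_compat_l; first lra.
  have := exp_ineq1_le (a * (ln y - ln x)).
  have : a * / y <= a * (ln y - ln x) by apply: Rmult_le_compat_l; lra.
  lra.
have -> : Rpower y (a - 1) = Y * / y.
  rewrite /Y /Rpower -(exp_ln y hy) ln_exp -exp_Ropp -exp_plus; f_equal; ring.
have hiy : 0 < / y by apply: Rinv_0_lt_compat.
have hyy : y * / y = 1 by field; lra.
have h1 : 1 <= y by rewrite /y; lra.
apply: (Rmult_le_reg_l (a * y)); first nra.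
have e1 : a * y * (2 / a * X + Y * / y) = 2 * X * y + a * Y by field; lra.
have e2 : a * y * (2 / a * Y) = 2 * Y * y by field; lra.
rewrite e1 e2.
have hYX' : X * (y + a) <= Y * y.
  have : X * (1 + a * / y) * y <= Y * y by apply: Rmult_le_compat_r; lra.
  have -> : X * (1 + a * / y) * y = X * (y + a) by field; lra.
  done.
apply: (Rmult_le_reg_l (y + a)); first lra.
have h2 : 2 * y * (X * (y + a)) <= 2 * y * (Y * y) by apply: Rmult_le_compat_l; lra.
have h3 : a * Y * (a - y) <= 0.
  have : 0 <= a * Y * (y - a) by apply: Rmult_le_pos; [apply: Rmult_le_pos; lra | lra].
  lra.
lra.
Qed.

Fixpoint T (t : R) (M : nat) : R :=
  match M with O => 0 | S M' => T t M' + Rpower (INR (S M')) (- t) end.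

Lemma Rpower_1l z : Rpower 1 z = 1.
Proof. by rewrite /Rpower ln_1 Rmult_0_r exp_0. Qed.

Lemma T_bound a : 0 < a <= 1 -> forall M,
  T (1 - a) (S M) <= 2 / a * Rpower (INR (S M)) a.
Proof.
move=> ha; elim=> [|M IH].
  rewrite /= Rplus_0_l !Rpower_1l.
  have : 1 <= 2 / a by apply: (Rmult_le_reg_l a); [lra| replace (a * (2 / a)) with 2 by (field; lra); lra].
  lra.
have eT : T (1-a) (S (S M)) = T (1-a) (S M) + Rpower (INR (S (S M))) (-(1-a)) by reflexivity.
rewrite eT.
have e : - (1 - a) = a - 1 by ring.
rewrite e.
have hx : 1 <= INR (S M) by apply: (le_INR 1); apply/leP.
have := key_step a (INR (S M)) ha hx.
rewrite -S_INR. lra.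
Qed.

Lemma Rpower_pos x z : 0 < Rpower x z.
Proof. exact: exp_pos. Qed.

Lemma T_mono t M M' : (M <= M')%nat -> T t M <= T t M'.
Proof.
move=> h; rewrite -(subnKC h).
elim: (M' - M)%nat => [|k IH]; first by rewrite addn0; lra.
rewrite addnS.
have eT : T t (M + k).+1 = T t (M + k) + Rpower (INR (M + k).+1) (- t) by reflexivity.
rewrite eT. have := Rpower_pos (INR (M + k).+1) (- t). lra.
Qed.

Lemma T_ge0 t M : 0 <= T t M.
Proof. have := @T_mono t 0 M (leq0n M). simpl. lra. Qed.

Lemma G_eq t (q X : nat) : (0 < q)%nat -> forall N,
  Fs (fun n => ind ((q %| n) /\ (n <= X)%nat) * Rpower (INR n) (- t)) N
  = Rpower (INR q) (- t) * T t (minn N X %/ q).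
Proof.
move=> hq; elim=> [|N IH].
  by rewrite /= min0n div0n /=; ring.
set g := (fun n => _).
have eF : Fs g (S N) = Fs g N + g (S N) by reflexivity.
rewrite eF IH /g.
have hNX : (N.+1 <= X)%nat \/ (X < N.+1)%nat by case: (leqP N.+1 X); [left|right].
case: hNX => hN.
  have e1 : minn N.+1 X = N.+1 by apply/minn_idPl.
  have e2 : minn N X = N by apply/minn_idPl; exact: ltnW.
  rewrite e1 e2 (divnS _ hq).
  case hd: (q %| N.+1).
    rewrite ind_T; last by split.
    rewrite add1n.
    have eT : T t (N %/ q).+1 = T t (N %/ q) + Rpower (INR (N %/ q).+1) (- t) by reflexivity.
    rewrite eT.
    have e4 : N.+1 %/ q = (N %/ q).+1 by rewrite (divnS _ hq) hd.
    have e3 : INR N.+1 = INR q * INR (N %/ q).+1.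
      rewrite -e4 -mult_INR; f_equal; symmetry; change ((q * (N.+1 %/ q))%nat = N.+1); by rewrite mulnC divnK.
    have hq0 : 0 < INR q by apply: lt_0_INR; apply/ltP.
    have hm0 : 0 < INR (N %/ q).+1 by apply: lt_0_INR; apply/ltP.
    rewrite e3 -Rpower_mult_distr //.
    ring.
  rewrite ind_F; last by move=> [h _]; move: hd; rewrite h.
  rewrite add0n; ring.
have e1 : minn N.+1 X = X by apply/minn_idPr; exact: ltnW.
have e2 : minn N X = X by apply/minn_idPr.
rewrite e1 e2 ind_F; last by move=> [_ h]; rewrite leqNgt hN in h.
ring.
Qed.

Definition Q (B d h n : nat) : Prop :=
  (2 <= d)%nat /\ ((expn d h %| n) /\ (n <= expn B h)%nat).

Lemma ind_mono (P P' : Prop) : (P -> P') -> ind P <= ind P'.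
Proof.
move=> H; rewrite /ind; destruct (excluded_middle_informative P);
destruct (excluded_middle_informative P'); simpl; try lra; tauto.
Qed.

Lemma Fs0 N : Fs (fun _ => 0) N = 0.
Proof. elim: N => [|N IH] //=; rewrite IH; ring. Qed.

Lemma Rpower_le_base x y z : 0 < x -> x <= y -> 0 <= z -> Rpower x z <= Rpower y z.
Proof.
move=> hx hxy hz; rewrite /Rpower; apply: exp_le_mono.
apply: Rmult_le_compat_l => //; exact: ln_le_mono.
Qed.

Lemma INR_expn d h : INR (expn d h) = INR d ^ h.
Proof.
elim: h => [|h IH]; first by rewrite expn0.
rewrite expnS; change (INR (Nat.mul d (expn d h)) = INR d ^ h.+1).
by rewrite mult_INR IH.
Qed.

Lemma inner B a d h N : (2 <= B)%nat -> 0 < a <= 1 -> a * ln (INR B) = ln 2 / 2 ->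
  Fs (fun n => ind (Q B d h n) * Rpower (INR n) (- (1 - a))) N
  <= 2 / a * exp (- (ln 2 / 2)) ^ h.
Proof.
move=> hB ha haB.
have hR : 0 <= 2 / a * exp (- (ln 2 / 2)) ^ h.
  apply: Rmult_le_pos; last by apply: pow_le; left; apply: exp_pos.
  apply: Rmult_le_pos; [lra| left; apply: Rinv_0_lt_compat; lra].
case: (leqP 2 d) => hd; last first.
  apply: (Rle_trans _ _ _ _ hR).
  rewrite -(Fs0 N); apply: Fs_le => n _.
  rewrite ind_F; first lra.
  by move=> [h2 _]; move: hd; rewrite ltnNge h2.
set q := expn d h. set X := expn B h.
have hq : (0 < q)%nat by rewrite /q expn_gt0; apply/orP; left; apply: leq_trans hd.
apply: (Rle_trans _ (Fs (fun n => ind ((q %| n) /\ (n <= X)%nat) * Rpower (INR n) (- (1 - a))) N)).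
  apply: Fs_le => n _; apply: Rmult_le_compat_r; first by left; apply: Rpower_pos.
  by apply: ind_mono => -[_ [h1 h2]].
rewrite (@G_eq _ q X hq).
have hw : 0 < Rpower (INR q) (- (1 - a)) by apply: Rpower_pos.
apply: (Rle_trans _ (Rpower (INR q) (- (1 - a)) * T (1 - a) (X %/ q))).
  apply: Rmult_le_compat_l; first lra.
  apply: T_mono; apply: leq_div2r; exact: geq_minr.
case eM: (X %/ q) => [|M].
  rewrite /= Rmult_0_r //.
have hq0 : 0 < INR q by apply: lt_0_INR; apply/ltP.
have hX0 : 0 < INR X by apply: lt_0_INR; apply/ltP; rewrite /X expn_gt0; apply/orP; left; apply: leq_trans hB.
apply: (Rle_trans _ (Rpower (INR q) (- (1 - a)) * (2 / a * Rpower (INR X / INR q) a))).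
  apply: Rmult_le_compat_l; first lra.
  apply: (Rle_trans _ _ _ (@T_bound a ha M)).
  apply: Rmult_le_compat_l; first by left; apply: Rdiv_lt_0_compat; lra.
  apply: Rpower_le_base; [apply: lt_0_INR; apply/ltP => // | | lra].
  rewrite -eM.
  apply: (Rmult_le_reg_r (INR q)) => //.
  rewrite /Rdiv Rmult_assoc Rinv_l; last lra.
  rewrite Rmult_1_r -mult_INR; apply: le_INR; apply/leP.
  exact: leq_trunc_div.
have e1 : Rpower (INR q) (- (1 - a)) * Rpower (INR X / INR q) a
          = exp (INR h * (a * ln (INR B) - ln (INR d))).
  rewrite /Rpower -exp_plus /Rdiv ln_mult //; last by apply: Rinv_0_lt_compat.
  rewrite ln_Rinv // /X /q !INR_expn !ln_pow; first (f_equal; ring).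
    apply: lt_0_INR; apply/ltP; exact: ltnW.
  apply: lt_0_INR; apply/ltP; exact: ltnW.
have e2 : Rpower (INR q) (- (1 - a)) * (2 / a * Rpower (INR X / INR q) a)
   = 2 / a * (Rpower (INR q) (- (1 - a)) * Rpower (INR X / INR q) a) by ring.
rewrite e2 e1.
apply: Rmult_le_compat_l; first by left; apply: Rdiv_lt_0_compat; lra.
rewrite -exp_mul_nat; apply: exp_le_mono.
apply: Rmult_le_compat_l; first exact: pos_INR.
rewrite haB.
have : ln 2 <= ln (INR d).
  apply: ln_le_mono; first lra.
  have -> : 2 = INR 2 by simpl; ring.
  apply: le_INR; apply/leP => //.
lra.
Qed.

Lemma H_witness n : H n = 0%nat \/ exists p, prime p /\ logn p n = H n.
Proof.
rewrite /H.
apply: (big_ind (fun x => x = 0%nat \/ exists p, prime p /\ logn p n = x)).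
- by left.
- by move=> x y hx hy /=; case: (leqP x y).
- move=> i hi; right; by exists i.
Qed.

Lemma point eps B n M : 0 < eps -> exp (1 / eps) < INR B -> (2 <= n)%nat -> (n <= M)%nat ->
  Rabs (INR (H n) / ln (INR n) - 0) >= eps ->
  exists d h, (d <= B)%nat /\ (h <= M)%nat /\ Q B d h n.
Proof.
move=> he hB hn hM hA.
have hn1 : 1 < INR n.
  have -> : 1 = INR 1 by [].
  apply: lt_INR; apply/ltP; exact: hn.
have hln : 0 < ln (INR n) by rewrite -ln_1; apply: ln_increasing; lra.
have hh : eps * ln (INR n) <= INR (H n).
  rewrite Rminus_0_r Rabs_pos_eq in hA; last first.
    apply: Rmult_le_pos; [exact: pos_INR | left; exact: Rinv_0_lt_compat].
  have : eps * ln (INR n) <= INR (H n) / ln (INR n) * ln (INR n)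
    by apply: Rmult_le_compat_r; lra.
  by rewrite /Rdiv Rmult_assoc Rinv_l ?Rmult_1_r; lra.
have hpos : 0 < eps * ln (INR n) by apply: Rmult_lt_0_compat.
case: (H_witness n) => [h0|[p [hp hlog]]].
  by rewrite h0 /= in hh; lra.
set h := H n in hh hlog *.
have hn0 : (0 < n)%nat by apply: leq_trans hn.
have hdiv : (expn p h %| n)%nat by rewrite -hlog pfactor_dvdnn.
have hpn : (expn p h <= n)%nat by apply: dvdn_leq.
have hhM : (h <= M)%nat.
  apply: ltnW; apply: (leq_trans (ltn_expl h (prime_gt1 hp))); exact: leq_trans hpn hM.
have hnB : (n <= expn B h)%nat.
  have hlnn : ln (INR n) <= INR h * (1 / eps).
    apply: (Rmult_le_reg_l eps) => //.
    have -> : eps * (INR h * (1 / eps)) = INR h by field; lra.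
    done.
  have : INR n <= INR (expn B h).
    rewrite INR_expn -(exp_ln (INR n)); last lra.
    apply: Rle_trans (exp_le_mono _ _ hlnn) _.
    rewrite exp_mul_nat; apply: pow_incr; split; [left; exact: exp_pos| lra].
  by move/INR_le/leP.
have hh0 : (0 < h)%nat.
  rewrite lt0n; apply/negP => /eqP h0; rewrite h0 /= in hh; lra.
exists p, h; split; last split => //.
  rewrite leqNgt; apply/negP => hBp.
  have : (expn B h < expn p h)%nat by rewrite ltn_exp2r.
  rewrite ltnNge; move/negP; apply; exact: leq_trans hpn hnB.
split; first exact: prime_gt1.
by split.
Qed.

Lemma sum_nonneg (f : nat -> R) K : (forall j, (j <= K)%nat -> 0 <= f j) -> 0 <= sum_f_R0 f K.
Proof.
move=> H; apply: (Rle_trans _ _ _ (H 0%nat (leq0n K))).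
by apply: sum_ge_term.
Qed.

Lemma Fs_ge0 (f : nat -> R) N : (forall n, 0 <= f n) -> 0 <= Fs f N.
Proof. move=> H; elim: N => [|N IH] /=; first lra. have := H N.+1; lra. Qed.

Lemma sum_scal_l c (f : nat -> R) M : sum_f_R0 (fun h => c * f h) M = c * sum_f_R0 f M.
Proof. elim: M => [|M IH] /=; first ring. rewrite IH; ring. Qed.

Lemma geom_bound c r M : 0 <= c -> 0 <= r < 1 ->
  sum_f_R0 (fun h => c * r ^ h) M <= c / (1 - r).
Proof.
move=> hc hr.
rewrite sum_scal_l tech3; last lra.
rewrite /Rdiv; apply: Rmult_le_compat_l => //.
have hp : 0 <= r ^ M.+1 by apply: pow_le; lra.
have hi : 0 < / (1 - r) by apply: Rinv_0_lt_compat; lra.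
have : (1 - r ^ M.+1) * / (1 - r) <= 1 * / (1 - r) by apply: Rmult_le_compat_r; lra.
lra.
Qed.

Definition Aset eps (n : nat) : Prop :=
  (2 <= n)%nat /\ Rabs (INR (H n) / ln (INR n) - 0) >= eps.

Lemma summable_main eps : 0 < eps -> exists t, 0 < t < 1 /\
  summable_exp (Aset eps) t.
Proof.
move=> he.
set A := Aset eps.
have [B hB] := INR_unbounded (exp (1 / eps)).
have he1 : 1 < exp (1 / eps).
  rewrite -[X in X < _]exp_0; apply: exp_increasing; apply: Rdiv_lt_0_compat; lra.
have hB2 : (2 <= B)%nat.
  rewrite leqNgt; apply/negP => hb.
  have : INR B <= INR 1 by apply: le_INR; apply/leP; rewrite -ltnS.
  simpl; lra.
have hB2R : 2 <= INR B by (have -> : 2 = INR 2 by simpl; ring); apply: le_INR; apply/leP.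
have hl2 : / 2 < ln 2 := ln_lt_2.
have hlB : ln 2 <= ln (INR B) by apply: ln_le_mono; lra.
set a := ln 2 / (2 * ln (INR B)).
have ha0 : 0 < a by apply: Rdiv_lt_0_compat; lra.
have haB : a * ln (INR B) = ln 2 / 2 by rewrite /a; field; lra.
have ha2 : a <= 1 / 2.
  apply: (Rmult_le_reg_r (ln (INR B))); first lra. rewrite haB; lra.
have ha1 : 0 < a <= 1 by split; lra.
set rr := exp (- (ln 2 / 2)).
have hrr : 0 <= rr < 1.
  split; first by left; apply: exp_pos.
  rewrite /rr -exp_0; apply: exp_increasing; lra.
exists (1 - a); split; first (split; lra).
set t := 1 - a.
set C := INR (S B) * (2 / a / (1 - rr)).
set w := fun n : nat => Rpower (INR n) (- t).
have hterm : forall N, 0 <= ind (A (S N)) * w (S N).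
  move=> N; apply: Rmult_le_pos; [exact: ind_ge0| left; exact: Rpower_pos].
have hbound : forall N, partial_sum A t N <= C.
  move=> N.
  rewrite /partial_sum (sum_psR (fun n => ind (A n) * w n)).
  set M := S N.
  apply: (Rle_trans _ (Fs (fun n => sum_f_R0 (fun d => sum_f_R0 (fun h => ind (Q B d h n) * w n) M) B) M)).
    apply: Fs_le => n /andP [hn1 hnM].
    have hin : forall d, 0 <= sum_f_R0 (fun h => ind (Q B d h n) * w n) M.
      move=> d; apply: sum_nonneg => j _; apply: Rmult_le_pos; [exact: ind_ge0| left; exact: Rpower_pos].
    have hout : 0 <= sum_f_R0 (fun d => sum_f_R0 (fun h => ind (Q B d h n) * w n) M) B.
      by apply: sum_nonneg => j _.
    case: (excluded_middle_informative (A n)) => hA; last by rewrite ind_F // Rmult_0_l.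
    have [hn2 hA'] := hA.
    have [d [h [hdB [hhM hQ]]]] := @point eps B n M he hB hn2 hnM hA'.
    rewrite ind_T //.
    apply: (Rle_trans _ (sum_f_R0 (fun h => ind (Q B d h n) * w n) M)); last first.
      apply: (sum_ge_term (fun d => sum_f_R0 (fun h => ind (Q B d h n) * w n) M)) => //.
    apply: (Rle_trans _ (ind (Q B d h n) * w n)); last first.
      apply: (sum_ge_term (fun h => ind (Q B d h n) * w n)) => // j _.
      apply: Rmult_le_pos; [exact: ind_ge0| left; exact: Rpower_pos].
    rewrite ind_T //; lra.
  rewrite (Fs_sum (fun d n => sum_f_R0 (fun h => ind (Q B d h n) * w n) M)).
  apply: (Rle_trans _ (sum_f_R0 (fun d => 2 / a / (1 - rr)) B)); last first.
    rewrite sum_cte /C; lra.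
  apply: sum_Rle => d _.
  rewrite (Fs_sum (fun h n => ind (Q B d h n) * w n)).
  apply: (Rle_trans _ (sum_f_R0 (fun h => 2 / a * rr ^ h) M)).
    apply: sum_Rle => h _.
    exact: inner.
  apply: geom_bound => //.
  apply: Rmult_le_pos; [lra| left; apply: Rinv_0_lt_compat; lra].
have hgrow : Un_growing (partial_sum A t).
  move=> N.
  have e : partial_sum A t N.+1 = partial_sum A t N + ind (A N.+2) * w N.+2 by reflexivity.
  rewrite e. have := hterm N.+1. lra.
have hub : has_ub (partial_sum A t).
  exists C => x [i ->]; exact: hbound.
have [l hl] := growing_cv _ hgrow hub.
by exists l.
Qed.

Theorem theorem7 :
  I_lt1_converges_from 2 (fun n => INR (H n) / ln (INR n)) 0.
Proof.
move=> eps he.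
have [t [[ht0 ht1] hs]] := @summable_main eps he.
set E := exp_set (fun n => (2 <= n)%nat /\ Rabs (INR (H n) / ln (INR n) - 0) >= eps).
have hEt : E t by split => //.
set F := fun x => E (- x).
have hFb : bound F.
  exists 0 => x hx. case: hx => hx _; lra.
have hFne : exists x, F x by exists (- t); rewrite /F Ropp_involutive.
have [m [hm1 hm2]] := completeness F hFb hFne.
exists (- m); split; last first.
  have : - t <= m by apply: hm1; rewrite /F Ropp_involutive.
  lra.
split.
  move=> x hx. have : - x <= m by apply: hm1; rewrite /F Ropp_involutive. lra.
move=> b hb.
have : m <= - b.
  apply: hm2 => y hy. have := hb _ hy. lra.
lra.
Qed.
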